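(* Let $R$ be a Noetherian commutative ring with unit. Then $(\mathrm{Id}^+(R),\tau^{\mathrm{con}},\le)$ and $(\mathrm{Id}(R),\tau^{\mathrm{con}},\le)$ are Noetherian Priestley spaces.
   Context: $\mathrm{Id}^+(R)$ is the set of all ideals of $R$ (including $R$) and $\mathrm{Id}(R)$ the set of proper ideals. Identifying an ideal with its characteristic function, these are closed subsets of $\{0,1\}^R$, and $\tau^{\mathrm{con}}$ is the induced product topology. The order is reverse inclusion: $\mathfrak A\le\mathfrak B$ iff $\mathfrak B\subseteq\mathfrak A$. A Priestley space is a partially ordered set with a quasi-compact topology such that whenever $y\not\le x$ there is a clopen down-set containing $x$ but not $y$; it is Noetherian if every decreasing sequence of closed down-sets is eventually stationary. *)

(* Defs.v *)
From HB Require Import structures.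
From mathcomp Require Import all_boot all_order all_algebra.
From mathcomp Require Import all_classical topology_structure compact function_spaces bool_topology.

Set Implicit Arguments. Unset Strict Implicit. Unset Printing Implicit Defensive.
Import GRing.Theory.
Local Open Scope classical_set_scope.
Local Open Scope ring_scope.

Definition is_ideal (R : comPzRingType) (I : R -> bool) : Prop :=
  [/\ I 0,
      (forall x y, I x -> I y -> I (x + y)) &
      (forall r x, I x -> I (r * x))].

Definition noetherian_ring (R : comPzRingType) : Prop :=
  forall I : nat -> (R -> bool),
    (forall n, is_ideal (I n)) ->
    (forall n x, I n x -> I n.+1 x) ->
    exists N, forall n, (N <= n)%N -> I n = I N.

(* Id^+(R) and Id(R), as subsets of {0,1}^R with the product topology. *)
Definition Idp (R : comPzRingType) : set {ptws R -> bool} :=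
  [set I | is_ideal I].
Definition Idproper (R : comPzRingType) : set {ptws R -> bool} :=
  [set I | is_ideal I /\ ~~ I 1].

Definition rev_incl (R : Type) (A B : {ptws R -> bool}) : Prop :=
  forall x, B x -> A x.

Definition open_in {T : topologicalType} (X D : set T) : Prop :=
  exists U, open U /\ D = X `&` U.
Definition closed_in {T : topologicalType} (X D : set T) : Prop :=
  exists C, closed C /\ D = X `&` C.
Definition clopen_in {T : topologicalType} (X D : set T) : Prop :=
  open_in X D /\ closed_in X D.

Definition down_set_in {T : Type} (X : set T) (le : T -> T -> Prop) (D : set T) :=
  D `<=` X /\ forall x y, X y -> D x -> le y x -> D y.

Definition partial_order_on {T : Type} (X : set T) (le : T -> T -> Prop) :=
  [/\ (forall x, X x -> le x x),
      (forall x y, X x -> X y -> le x y -> le y x -> x = y) &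
      (forall x y z, X x -> X y -> X z -> le x y -> le y z -> le x z)].

Definition priestley_space {T : topologicalType} (X : set T) (le : T -> T -> Prop) :=
  [/\ partial_order_on X le,
      compact X &
      forall x y, X x -> X y -> ~ le y x ->
        exists D, [/\ clopen_in X D, down_set_in X le D, D x & ~ D y]].

Definition noetherian_space {T : topologicalType} (X : set T) (le : T -> T -> Prop) :=
  forall D : nat -> set T,
    (forall n, closed_in X (D n) /\ down_set_in X le (D n)) ->
    (forall n, D n.+1 `<=` D n) ->
    exists N, forall n, (N <= n)%N -> D n = D N.

Definition noetherian_priestley_space {T : topologicalType} (X : set T) (le : T -> T -> Prop) :=
  priestley_space X le /\ noetherian_space X le.

(* Main.v *)
Require Import Defs.
From mathcomp Require Import all_boot all_order all_algebra.
From mathcomp Require Import all_classical topology_structure compact function_spaces bool_topology discrete_topology.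
Set Implicit Arguments. Unset Strict Implicit. Unset Printing Implicit Defensive.
Import GRing.Theory.
Local Open Scope classical_set_scope.
Local Open Scope ring_scope.

Section S.
Variable R : comPzRingType.

Fixpoint gen (s : seq R) (y : R) : bool :=
  match s with
  | [::] => y == 0
  | x :: s' => `[< exists r, gen s' (y - r * x) >]
  end.

Lemma gen_ideal s : is_ideal (gen s).
Proof.
elim: s => [|x s [IH0 IHD IHM]] /=.
  split; first by [].
  - by move=> x y /eqP-> /eqP->; rewrite addr0.
  - by move=> r x /eqP->; rewrite mulr0.
split.
- by apply/asboolP; exists 0; rewrite mul0r subr0.
- move=> a b /asboolP[r ha] /asboolP[r' hb]; apply/asboolP; exists (r + r').
  have -> : a + b - (r + r') * x = (a - r * x) + (b - r' * x).
    by rewrite mulrDl opprD addrACA.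
  exact: IHD.
- move=> t a /asboolP[r ha]; apply/asboolP; exists (t * r).
  have -> : t * a - t * r * x = t * (a - r * x) by rewrite mulrBr mulrA.
  exact: IHM.
Qed.

Lemma gen_min s (J : R -> bool) : is_ideal J -> (forall g, g \in s -> J g) ->
  forall y, gen s y -> J y.
Proof.
move=> [J0 JD JM]; elim: s => [|x s IH] hs y /=; first by move/eqP->.
move=> /asboolP[r hr].
have -> : y = (y - r * x) + r * x by rewrite subrK.
apply: JD; last by apply: JM; apply: hs; rewrite inE eqxx.
by apply: IH hr => g gs; apply: hs; rewrite inE gs orbT.
Qed.

Lemma gen_cons x s y : gen s y -> gen (x :: s) y.
Proof. by move=> h; apply/asboolP; exists 0; rewrite mul0r subr0. Qed.

Lemma gen_head x s : gen (x :: s) x.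
Proof. by apply/asboolP; exists 1; rewrite mul1r subrr; case: (gen_ideal s). Qed.

Lemma fg (hR : noetherian_ring R) (L : R -> bool) : is_ideal L ->
  exists s : seq R, (forall g, g \in s -> L g) /\ (forall y, L y -> gen s y).
Proof.
move=> iL; apply: contrapT => hn.
have hx : forall s : seq R, exists x : R,
    (forall g, g \in s -> L g) -> L x /\ ~~ gen s x.
  move=> s; case: (pselect (forall g, g \in s -> L g)) => hs; last first.
    by exists 0.
  have : ~ (forall y, L y -> gen s y) by move=> h; apply: hn; exists s.
  move=> /existsNP[y /not_implyP[Ly ng]]; exists y => _; split => //.
  by apply/negP.
have [f hf] := choice hx.
pose seqs := fix seqs n := if n is n'.+1 then f (seqs n') :: seqs n' else [::].
have sub : forall n g, g \in seqs n -> L g.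
  elim=> [|n IH] g //=; rewrite inE => /orP[/eqP->|/IH //].
  by case: (hf (seqs n) IH).
have [N hN] := hR (fun n => gen (seqs n)) (fun n => gen_ideal _)
  (fun n x => @gen_cons _ _ x).
have := hN N.+1 (leqnSn N) => /(congr1 (fun h => h (f (seqs N)))) /=.
move=> e; case: (hf (seqs N) (sub N)) => _; rewrite -e; apply/negP/negPn; exact: gen_head.
Qed.
Lemma nb1 (p : {ptws R -> bool}) (z : R) : nbhs p [set f : {ptws R -> bool} | f z = p z].
Proof.
have := @proj_continuous R (fun _ => bool) z p.
move=> /(_ [set b | b = p z]); apply.
exact: discrete_set1.
Qed.

Lemma nbl (p : {ptws R -> bool}) (s : seq R) : nbhs p [set f : {ptws R -> bool} | forall g, g \in s -> f g = p g].
Proof.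
elim: s => [|x s IH].
  by apply: filterS filterT => f _ g.
apply: filterS (filterI (nb1 p x) IH) => f [fx fs] g.
by rewrite inE => /orP[/eqP->|/fs].
Qed.

Lemma clpt (A : set {ptws R -> bool}) p (s : seq R) : closure A p ->
  exists f, A f /\ forall g, g \in s -> f g = p g.
Proof. by move=> /(_ _ (nbl p s)) [f [Af Bf]]; exists f. Qed.

Lemma compactT : compact [set: {ptws R -> bool}].
Proof.
have := @tychonoff R (fun _ => bool) (fun _ => setT) (fun _ => bool_compact).
by congr compact; apply/seteqP; split.
Qed.

Lemma leS (D : nat -> set {ptws R -> bool}) : (forall n, D n.+1 `<=` D n) ->
  forall m n, (m <= n)%N -> D n `<=` D m.
Proof.
move=> hD m n /subnK <-; elim: (n - m)%N => [|k IH] //=.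
by rewrite addSn => f /hD /IH.
Qed.

Lemma mainX (hR : noetherian_ring R) (X : set {ptws R -> bool}) :
  closed X -> X `<=` @Idp R -> noetherian_priestley_space X (@rev_incl R).
Proof.
move=> clX XI; split; first split.
- split.
  + by move=> x _ z.
  + move=> x y _ _ hxy hyx; apply/funext => z.
    by apply/idP/idP => [/hyx|/hxy].
  + by move=> x y z _ _ _ h1 h2 t /h2 /h1.
- exact: subclosed_compact clX (@compactT) (fun _ _ => I).
- move=> x y Xx Xy nyx.
  have [z [xz nyz]] : exists z, x z /\ ~ y z.
    apply: contrapT => h; apply: nyx => z xz.
    by apply: contrapT => nz; apply: h; exists z.
  exists (X `&` [set f : {ptws R -> bool} | f z]); split.
  + split.
      exists [set f : {ptws R -> bool} | f z]; split => //.
      rewrite openE => p pz; apply: filterS (nb1 p z) => f /= ->; exact: pz.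
    exists [set f : {ptws R -> bool} | f z]; split => //.
    by move=> p /(clpt [:: z]) [f [fz /(_ z (mem_head _ _))]] /= <-.
  + split; first by move=> f [].
    by move=> a b Xb [_ az] hba; split => //; apply: hba.
  + by [].
  + by case.
- move=> D hD hdec; apply: contrapT => hn.
  pose Dinf := fun f => forall n, D n f.
  have hx : forall N, exists f, D N f /\ ~ Dinf f.
    move=> N; apply: contrapT => h.
    apply: hn; exists N => n Nn; apply/seteqP; split; first exact: leS.
    move=> f DNf; apply: contrapT => nDn.
    by apply: h; exists f; split => // hinf; apply: nDn; apply: hinf.
  have [J hJ] := choice hx.
  have XJn : forall n, X (J n) by move=> n; case: (hD n) => _ [/(_ _ (hJ n).1)].
  pose F := fmap J eventually.
  have PF : ProperFilter F by apply: fmap_proper_filter; exact: eventually_filter.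
  have FX : F X by exists 0%N => // n _; exact: XJn.
  have [L [XL clL]] := subclosed_compact clX (@compactT) (fun _ _ => I) PF FX.
  have DinfL : Dinf L.
    move=> m; case: (hD m) => [[C [clC eD]] _]; rewrite eD; split => //.
    apply: clC => B nB.
    have FC : F C.
      exists m => // n mn /=.
      by have := leS hdec mn (hJ n).1; rewrite eD => -[].
    exact: clL FC nB.
  have [s [sL Ls]] := fg hR (XI _ XL).
  have FR : F (range J) by exists 0%N => // n _; exists n.
  have [f [[n _ <-] hf]] := clL _ _ FR (nbl L s).
  apply: (hJ n).2 => m; case: (hD m) => _ [_ dm].
  apply: dm (XJn n) (DinfL m) _ => t Lt.
  apply: (gen_min (XI _ (XJn n))) (Ls _ Lt) => g gs.
  by rewrite (hf g gs); exact: sL.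
Qed.

Lemma closedIdp : closed (@Idp R).
Proof.
move=> p clp; split.
- by have [f [[f0 _ _] /(_ 0 (mem_head _ _))]] := clpt [:: 0] clp => <-.
- move=> x y px py.
  have [f [[_ fD _] hf]] := clpt [:: x; y; x + y] clp.
  rewrite -hf ?inE ?eqxx ?orbT //; apply: fD; rewrite hf // !inE eqxx ?orbT //.
- move=> r x px.
  have [f [[_ _ fM] hf]] := clpt [:: x; r * x] clp.
  rewrite -hf ?inE ?eqxx ?orbT //; apply: fM; rewrite hf // !inE eqxx ?orbT //.
Qed.

Lemma subIdp : @Idproper R `<=` @Idp R.
Proof. by move=> f []. Qed.

Lemma closedIdproper : closed (@Idproper R).
Proof.
move=> p clp; split.
  by apply: closedIdp; apply: closureS clp; exact: subIdp.
have [f [[_ f1] /(_ 1 (mem_head _ _))]] := clpt [:: 1] clp.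
by move=> <-.
Qed.
End S.

Theorem lemma3p18 (R : comPzRingType) (hR : noetherian_ring R) :
  noetherian_priestley_space (@Idp R) (@rev_incl R) /\
  noetherian_priestley_space (@Idproper R) (@rev_incl R).
Proof.
split; apply: mainX => //.
- exact: closedIdp.
- exact: closedIdproper.
- exact: subIdp.
Qed.
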